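(* Let $W=\langle \mathcal{D},\mathcal{N},\mathrm{wr},\mathrm{gd}\rangle$ be a (1-safe) DAW-net and let $\mathit{RG}_W=(T,\overline{S},\overline{s}_0,\overline{\delta})$ be its reachability graph. Let $\mathrm{bc}(W)$ be the $\mathcal{BC}$ action description encoding $W$ and $\mathit{TS}_{\mathrm{bc}(W)}$ the transition system induced by $\mathrm{bc}(W)$ (all as defined in the context). Then $\mathit{TS}_{\mathrm{bc}(W)}$ and $\mathit{RG}_W$ are trace equivalent.
   Context: **Data model and guards.** A data model is $\mathcal{D}=(\mathcal{V},\Delta,\mathrm{dm},\mathrm{ord})$: $\mathcal{V}$ is a set of variables; $\Delta=\{\Delta_1,\dots,\Delta_n\}$ is a set of (not necessarily disjoint) domains; $\mathrm{dm}:\mathcal{V}\to\Delta$ is total and surjective and assigns to each variable its finite domain; $\mathrm{ord}$ is a partial function which, for a domain $\Delta_i$ on which it is defined, returns a partial order $\le_{\Delta_i}\subseteq\Delta_i\times\Delta_i$. An assignment is a partial function $\eta$ on $\mathcal{V}$ with $\eta(v)\in\mathrm{dm}(v)$ whenever $\eta(v)$ is defined. Guards are given by the grammar $\Phi ::= \mathit{true}\mid \mathrm{def}(v)\mid t_1=t_2\mid t_1\le t_2\mid \neg\Phi\mid \Phi\wedge\Phi$, where $v\in\mathcal{V}$ and $t_1,t_2\in\mathcal{V}\cup\bigcup_i\Delta_i$. Write $t[\eta]$ for $\eta(t)$ if $t$ is a variable on which $\eta$ is defined, and $t$ otherwise. Then $\mathcal{D},\eta\models\mathit{true}$; $\mathcal{D},\eta\models\mathrm{def}(v)$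 iff $\eta(v)$ is defined; $\mathcal{D},\eta\models t_1=t_2$ iff $t_1[\eta],t_2[\eta]\notin\mathcal{V}$ and $t_1[\eta]=t_2[\eta]$; $\mathcal{D},\eta\models t_1\le t_2$ iff $t_1[\eta],t_2[\eta]\in\Delta_i$ for some $i$ with $\mathrm{ord}(\Delta_i)$ defined and $t_1[\eta]\le_{\Delta_i}t_2[\eta]$; negation and conjunction are classical. **DAW-nets.** A Petri net is $\mathcal{N}=(P,T,F)$ with $F\subseteq(P\times T)\cup(T\times P)$; ${}^\bullet t=\{p\mid (p,t)\in F\}$, $t^\bullet=\{p\mid (t,p)\in F\}$; a marking is $M:P\to\mathbb{N}$. $\mathcal{N}$ is a workflow net with a distinguished place $\mathit{start}$ (no incoming arcs) and a distinguished place $\mathit{sink}$. A DAW-net is $W=\langle\mathcal{D},\mathcal{N},\mathrm{wr},\mathrm{gd}\rangle$ where $\mathrm{wr}$ maps each $t\in T$ to a partial function $\mathrm{wr}(t)$ from $\mathcal{V}$ with $\mathrm{wr}(t)(v)\subseteq\mathrm{dm}(v)$, and $\mathrm{gd}$ maps each $t$ to a guard. A state is a pair $(M,\eta)$. A firing $(M,\eta)\xrightarrow{t}(M',\eta')$ is valid iff: $\{p\mid M(p)>0\}\supseteq{}^\bullet t$; $\mathcal{D},\eta\models\mathrm{gd}(t)$; $M'(p)=M(p)-1$ if $p\in{}^\bullet t\setminus t^\bullet$, $M'(p)=M(p)+1$ if $p\in t^\bullet\setminus{}^\bullet t$, $M'(p)=M(p)$ otherwise; $\mathrm{dom}(\eta')=\mathrm{dom}(\eta)\cup\{v\mid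 \mathrm{wr}(t)(v)\neq\emptyset\}\setminus\{v\mid\mathrm{wr}(t)(v)=\emptyset\}$ and for $v\in\mathrm{dom}(\eta')$, $\eta'(v)\in\mathrm{wr}(t)(v)$ if $v\in\mathrm{dom}(\mathrm{wr}(t))$ and $\eta'(v)=\eta(v)$ otherwise. The initial state is $(M_s,\eta_s)$ with $M_s(\mathit{start})=1$, $M_s(p)=0$ for other $p$, and $\eta_s$ empty. Standing assumption: $W$ is 1-safe (in every state reachable from the initial state each place holds at most one token). $\mathcal{V}'$ is the finite set of variables appearing in $W$, and $\mathrm{adm}(v)=\bigcup_{t\in T}\mathrm{wr}(t)(v)$ is the active domain of $v$. **Reachability graph.** $\mathit{RG}_W=(T,\overline{S},\overline{s}_0,\overline{\delta})$ with $\overline{s}_0=(M_s,\eta_s)$, where $\overline{S}$ and $\overline{\delta}\subseteq\overline{S}\times T\times\overline{S}$ are the least sets such that $\overline{s}_0\in\overline{S}$ and, if $(M,\eta)\in\overline{S}$ and $(M,\eta)\xrightarrow{t}(M',\eta')$ is valid, then $(M',\eta')\in\overline{S}$ and $((M,\eta),t,(M',\eta'))\in\overline{\delta}$. **Trace equivalence.** A path of a labelled transition system is a sequence $s_0\xrightarrow{l_1}s_1\cdots\xrightarrow{l_n}s_n$ ($n\ge0$) starting in an initial state and following its transitions. $\mathit{RG}$ and a transition system $\mathit{TS}$ are trace equivalent iff there is an injective function $\mathrm{enc}$ from the states and transitions of $\mathit{RG}$ to the states and transition labels of $\mathit{TS}$ such that (1) for every path $s_0\xrightarrow{t_1}\cdots\xrightarrow{t_n}s_n$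 of $\mathit{RG}$, $\mathrm{enc}(s_0)\xrightarrow{\mathrm{enc}(t_1)}\cdots\xrightarrow{\mathrm{enc}(t_n)}\mathrm{enc}(s_n)$ is a path of $\mathit{TS}$; and (2) for every path $s'_0\xrightarrow{t'_1}\cdots\xrightarrow{t'_n}s'_n$ of $\mathit{TS}$ there is a path $s_0\xrightarrow{t_1}\cdots\xrightarrow{t_n}s_n$ of $\mathit{RG}$ with $\mathrm{enc}(s_i)=s'_i$ for $0\le i\le n$ and $\mathrm{enc}(t_i)=t'_i$ for $1\le i\le n$. **The action language $\mathcal{BC}$.** A description $B$ has fluent constants, each with a finite domain of size $\ge 2$ (Boolean fluents have domain $\{\mathrm{true},\mathrm{false}\}$), and action constants; an atom is $f=v$ with $v$ in the domain of $f$. Dynamic laws are ''$A_0$ after $A'_1,\dots,A'_n$ ifcons $A_{n+1},\dots,A_m$'' ($A_0,A_{n+1},\dots,A_m$ atoms or $A_0=\mathrm{false}$; $A'_j$ atoms or action constants), static laws ''$A_0$ if $A_1,\dots,A_n$ ifcons $A_{n+1},\dots,A_m$'', and ''initially $A$''. For $\ell\ge0$, $P_\ell(B)$ is the disjunctive logic program with classical negation $\neg$ and default negation $\sim$ over atoms $i{:}A$ containing: for each static law and $0\le i\le\ell$, $i{:}A_0\leftarrow i{:}A_1,\dots,i{:}A_n,\sim\neg(i{:}A_{n+1}),\dots,\sim\neg(i{:}A_m)$; for each dynamic law and $0\le i<\ell$, $i{+}1{:}A_0\leftarrow i{:}A'_1,\dots,i{:}A'_n,\sim\neg(i{+}1{:}A_{n+1}),\dots,\sim\neg(i{+}1{:}A_m)$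 (a constraint when $A_0=\mathrm{false}$); for each ''initially $f=v$'', the fact $0{:}f=v$; $0{:}f=v\vee\neg(0{:}f=v)$ for each fluent $f$ and value $v$; $i{:}a\vee\neg(i{:}a)$ for each action constant $a$ and $i<\ell$; and for each fluent $f$ and $i\le\ell$, $\leftarrow\sim(i{:}f=v_1),\dots,\sim(i{:}f=v_k)$ (where $v_1,\dots,v_k$ is its domain) and $\neg(i{:}f=v)\leftarrow i{:}f=w$ for $v\neq w$. For a stable model (answer set) $X$ of $P_\ell(B)$ let $\sigma_i(X)=\{f\mapsto o\mid (i{:}f=o)\in X\}$. The transition system $\mathit{TS}_{B}=(\mathcal{A},S,S_0,\delta)$ ($\mathcal{A}$ the action constants, transitions labelled by subsets of $\mathcal{A}$) has $S_0=\{\sigma_0(X)\mid X$ a stable model of $P_0(B)\}$, and $S,\delta$ are the least sets with $S_0\subseteq S$ such that whenever $X$ is a stable model of $P_{\ell+1}(B)$ for some $\ell\ge0$ with $\sigma_\ell(X)\in S$, then $\sigma_{\ell+1}(X)\in S$ and $(\sigma_\ell(X),\{a\mid (\ell{:}a)\in X\},\sigma_{\ell+1}(X))\in\delta$. **The encoding $\mathrm{bc}(W)$.** Fluents: for each $v\in\mathcal{V}'$ a fluent $v$ with domain $\mathrm{adm}(v)\cup\{\mathrm{null}\}$; for each $p\in P$ a Boolean fluent $p$; a Boolean fluent $\mathit{trans}$. Action constants: the transitions $t\in T$. Laws: ''$v=o$ after $v=o$ ifcons $v=o$'' for $v\in\mathcal{V}'$, $o\in\mathrm{adm}(v)\cup\{\mathrm{null}\}$;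 ''$p=o$ after $p=o$ ifcons $p=o$'' for $p\in P$, $o\in\{\mathrm{true},\mathrm{false}\}$; for each $t\in T$: ''$p=\mathrm{false}$ after $t$'' for $p\in{}^\bullet t\setminus t^\bullet$; ''$p=\mathrm{true}$ after $t$'' for $p\in t^\bullet\setminus{}^\bullet t$; ''$v=d$ after $t$ ifcons $v=d$'' for $d\in\mathrm{wr}(t)(v)$; ''$v=\mathrm{null}$ after $t$'' for $v$ with $\mathrm{wr}(t)(v)=\emptyset$; ''false after $t$ ifcons $v=d$'' for $v$ with $\mathrm{wr}(t)(v)\neq\emptyset$ and $d\in\{\mathrm{null}\}\cup\mathrm{adm}(v)\setminus\mathrm{wr}(t)(v)$; ''false after $t,s$'' for $t\neq s$; ''false after $t,p=\mathrm{false}$'' for $p\in{}^\bullet t$; ''$\mathit{trans}=\mathrm{true}$ after $t$''; ''initially $\mathit{start}=\mathrm{true}$'', ''initially $p=\mathrm{false}$'' for $p\neq\mathit{start}$, ''initially $v=\mathrm{null}$'' for $v\in\mathcal{V}'$, ''initially $\mathit{trans}=\mathrm{true}$''. Guards: a DNF characterisation of a guard $\Phi$ is a formula $\bigvee_{i=1}^k t^i_1\wedge\dots\wedge t^i_{\ell_i}$ equivalent to $\Phi$ over the data model, each term $t^i_j$ being of the form $v=o$ or $\neg\mathrm{def}(v)$; its translation replaces $v=o$ by the atom $v=o$ and $\neg\mathrm{def}(v)$ by $v=\mathrm{null}$ (write $[\![\cdot]\!]$). For each $t$ with $\mathrm{gd}(t)\not\equiv\mathit{true}$, taking such a characterisation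 of $\neg\mathrm{gd}(t)$, $\mathrm{bc}(W)$ contains ''false after $t,[\![t^i_1]\!],\dots,[\![t^i_{\ell_i}]\!]$'' for each $i=1,\dots,k$. *)

(* Defs.v *)
From mathcomp Require Import all_boot.
From Stdlib Require List.
Set Implicit Arguments. Unset Strict Implicit. Unset Printing Implicit Defensive.

Section LTS.
Variables (S L : Type).

Fixpoint chain (tr : S -> L -> S -> Prop) (s : S) (steps : seq (L * S)) : Prop :=
  match steps with
  | [::] => True
  | (l, s') :: r => tr s l s' /\ chain tr s' r
  end.

Definition is_path (init : S -> Prop) (tr : S -> L -> S -> Prop)
  (s0 : S) (steps : seq (L * S)) : Prop :=
  init s0 /\ chain tr s0 steps.
End LTS.

(* RG (states1 = its state set, init1, tr1) and TS (init2, tr2) are trace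
   equivalent: an injective encoding of states and transitions of RG into
   states and labels of TS satisfying conditions (1) and (2). *)
Definition trace_equiv (S1 L1 S2 L2 : Type)
  (states1 : S1 -> Prop) (init1 : S1 -> Prop) (tr1 : S1 -> L1 -> S1 -> Prop)
  (init2 : S2 -> Prop) (tr2 : S2 -> L2 -> S2 -> Prop) : Prop :=
  exists (encS : S1 -> S2) (encL : L1 -> L2),
    (forall s s', states1 s -> states1 s' -> encS s = encS s' -> s = s') /\
    (forall l l', encL l = encL l' -> l = l') /\
    (forall s0 steps, is_path init1 tr1 s0 steps ->
        is_path init2 tr2 (encS s0) [seq (encL p.1, encS p.2) | p <- steps]) /\
    (forall s0' steps', is_path init2 tr2 s0' steps' ->
        exists s0 steps, is_path init1 tr1 s0 steps /\ encS s0 = s0' /\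
          [seq (encL p.1, encS p.2) | p <- steps] = steps').

Section DataModel.
Variables (Var Val : eqType) (DomI : finType).

(* Domains Delta_i are indexed by the finite type DomI. *)
Record dataModel := DataModel {
  dset : DomI -> seq Val;
  dm   : Var -> DomI;
  ord  : DomI -> option (rel Val)
}.

Definition wf_dataModel (D : dataModel) : Prop :=
  (forall i, exists v, dm D v = i) /\
  (* Delta is a set of domains: distinct indices are distinct domains *)
  (forall i j, dset D i =i dset D j -> i = j) /\
  (forall i le, ord D i = Some le ->
     (forall x y, le x y -> (x \in dset D i) && (y \in dset D i)) /\
     (forall x, x \in dset D i -> le x x) /\
     (forall x y, le x y -> le y x -> x = y) /\
     (forall x y z, le x y -> le y z -> le x z)).

Inductive gterm := TVar (v : Var) | TCst (d : Val).

Inductive guard :=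
  | GTrue
  | GDef (v : Var)
  | GEq (t1 t2 : gterm)
  | GLe (t1 t2 : gterm)
  | GNot (g : guard)
  | GAnd (g1 g2 : guard).

Definition assignment := Var -> option Val.

Definition asg_ok (D : dataModel) (eta : assignment) : Prop :=
  forall v d, eta v = Some d -> d \in dset D (dm D v).

(* t[eta] when it is a domain value (None: t is a variable not assigned by eta) *)
Definition tval (eta : assignment) (t : gterm) : option Val :=
  match t with TVar v => eta v | TCst d => Some d end.

Fixpoint holds (D : dataModel) (eta : assignment) (g : guard) : Prop :=
  match g with
  | GTrue => True
  | GDef v => eta v <> None
  | GEq t1 t2 => exists d, tval eta t1 = Some d /\ tval eta t2 = Some d
  | GLe t1 t2 => exists d1 d2 i le,
      tval eta t1 = Some d1 /\ tval eta t2 = Some d2 /\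
      d1 \in dset D i /\ d2 \in dset D i /\ ord D i = Some le /\ le d1 d2
  | GNot g' => ~ holds D eta g'
  | GAnd g1 g2 => holds D eta g1 /\ holds D eta g2
  end.

Definition tconsts (t : gterm) : seq Val :=
  match t with TVar _ => [::] | TCst d => [:: d] end.

Fixpoint gconsts (g : guard) : seq Val :=
  match g with
  | GTrue | GDef _ => [::]
  | GEq t1 t2 | GLe t1 t2 => tconsts t1 ++ tconsts t2
  | GNot g' => gconsts g'
  | GAnd g1 g2 => gconsts g1 ++ gconsts g2
  end.

Definition toccurs (v : Var) (t : gterm) : bool :=
  match t with TVar u => u == v | TCst _ => false end.

Fixpoint goccurs (v : Var) (g : guard) : bool :=
  match g with
  | GTrue => false
  | GDef u => u == v
  | GEq t1 t2 | GLe t1 t2 => toccurs v t1 || toccurs v t2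
  | GNot g' => goccurs v g'
  | GAnd g1 g2 => goccurs v g1 || goccurs v g2
  end.

Definition guard_true (D : dataModel) (g : guard) : Prop :=
  forall eta, asg_ok D eta -> holds D eta g.

End DataModel.

Section DAWNet.
Variables (Var Val : eqType) (DomI Place Trans : finType).

Record dawnet := DAWNet {
  dmodel : dataModel Var Val DomI;
  pre  : Trans -> Place -> bool;      (* (p,t) in F, i.e. p in pre-set of t *)
  post : Trans -> Place -> bool;      (* (t,p) in F, i.e. p in post-set of t *)
  pstart : Place;
  psink : Place;
  wr : Trans -> Var -> option (seq Val);   (* wr(t) partial, wr(t)(v) a finite set *)
  gd : Trans -> guard Var Val
}.

Variable W : dawnet.

Definition wf_dawnet : Prop :=
  wf_dataModel (dmodel W) /\
  (forall t, ~~ post W t (pstart W)) /\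
  (forall t v s, wr W t v = Some s -> forall d, d \in s -> d \in dset (dmodel W) (dm (dmodel W) v)) /\
  (forall t d, d \in gconsts (gd W t) -> exists i, d \in dset (dmodel W) i).

Definition mstate := ((Place -> nat) * assignment Var Val)%type.

Definition valid_firing (s : mstate) (t : Trans) (s' : mstate) : Prop :=
  let: (M, eta) := s in let: (M', eta') := s' in
  (forall p, pre W t p -> 0 < M p) /\
  holds (dmodel W) eta (gd W t) /\
  (forall p, M' p = if pre W t p && ~~ post W t p then M p - 1
                   else if post W t p && ~~ pre W t p then M p + 1
                   else M p) /\
  (forall v, match wr W t v with
             | None => eta' v = eta v
             | Some [::] => eta' v = None
             | Some s => exists d, d \in s /\ eta' v = Some d
             end).

Definition init_state : mstate :=
  (fun p => if p == pstart W then 1 else 0, fun _ => None).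

Inductive reachable : mstate -> Prop :=
  | reach0 : reachable init_state
  | reachS s t s' : reachable s -> valid_firing s t s' -> reachable s'.

Definition RG_init (s : mstate) : Prop := s = init_state.

Definition RG_trans (s : mstate) (t : Trans) (s' : mstate) : Prop :=
  reachable s /\ valid_firing s t s'.

Definition one_safe : Prop :=
  forall s, reachable s -> forall p, s.1 p <= 1.

Definition inVp (v : Var) : bool :=
  [exists t, (wr W t v != None) || goccurs v (gd W t)].

Definition VarP := {v : Var | inVp v}.

Definition adm (v : Var) : seq Val :=
  flatten [seq odflt [::] (wr W t v) | t <- enum Trans].

End DAWNet.

Section BC.
Variables (F A Vl : Type).   (* fluent constants, action constants, values *)

Definition atom := (F * Vl)%type.   (* f = v *)

Record bcDesc := BCDesc {
  bdom : F -> seq Vl;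
  (* static law  "h if b ifcons c"  (h = None means false) *)
  bstatic : option atom -> seq atom -> seq atom -> Prop;
  (* dynamic law "h after b ifcons c" *)
  bdynamic : option atom -> seq (atom + A) -> seq atom -> Prop;
  binit : atom -> Prop
}.

(* ground atoms  i:f=v  and  i:a *)
Inductive gatom := GFl (i : nat) (f : F) (v : Vl) | GAct (i : nat) (a : A).
Inductive lit := LPos (g : gatom) | LNeg (g : gatom).
(* disjunctive rule  head <- pos, ~naf *)
Record rule := Rule { rhead : seq lit; rpos : seq lit; rnaf : seq lit }.

Definition gat (i : nat) (a : atom) : gatom := GFl i a.1 a.2.
Definition gaft (i : nat) (x : atom + A) : gatom :=
  match x with inl a => gat i a | inr a => GAct i a end.
Definition ghead (i : nat) (h : option atom) : seq lit :=
  match h with Some a => [:: LPos (gat i a)] | None => [::] end.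

Definition prog (B : bcDesc) (l : nat) (r : rule) : Prop :=
  (exists h b c i, bstatic B h b c /\ i <= l /\
     r = Rule (ghead i h) [seq LPos (gat i x) | x <- b] [seq LNeg (gat i x) | x <- c]) \/
  (exists h b c i, bdynamic B h b c /\ i < l /\
     r = Rule (ghead i.+1 h) [seq LPos (gaft i x) | x <- b] [seq LNeg (gat i.+1 x) | x <- c]) \/
  (exists a, binit B a /\ r = Rule [:: LPos (gat 0 a)] [::] [::]) \/
  (exists f v, List.In v (bdom B f) /\
     r = Rule [:: LPos (GFl 0 f v); LNeg (GFl 0 f v)] [::] [::]) \/
  (exists a i, i < l /\ r = Rule [:: LPos (GAct i a); LNeg (GAct i a)] [::] [::]) \/
  (exists f i, i <= l /\ r = Rule [::] [::] [seq LPos (GFl i f v) | v <- bdom B f]) \/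
  (exists f v w i, i <= l /\ List.In v (bdom B f) /\ List.In w (bdom B f) /\ v <> w /\
     r = Rule [:: LNeg (GFl i f v)] [:: LPos (GFl i f w)] [::]).

Definition consistent (X : lit -> Prop) : Prop :=
  forall g, ~ (X (LPos g) /\ X (LNeg g)).

(* Y is closed under the Gelfond-Lifschitz reduct P^X *)
Definition closed_reduct (P : rule -> Prop) (X Y : lit -> Prop) : Prop :=
  forall r, P r ->
    (forall L, List.In L (rnaf r) -> ~ X L) ->
    (forall L, List.In L (rpos r) -> Y L) ->
    exists L, List.In L (rhead r) /\ Y L.

Definition stable (P : rule -> Prop) (X : lit -> Prop) : Prop :=
  consistent X /\ closed_reduct P X X /\
  (forall Y, (forall L, Y L -> X L) -> closed_reduct P X Y -> forall L, X L -> Y L).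

(* sigma_i(X) = { f |-> o | i:f=o in X }, as a relation *)
Definition bstate := F -> Vl -> Prop.
Definition sigma (i : nat) (X : lit -> Prop) : bstate := fun f o => X (LPos (GFl i f o)).
Definition label (i : nat) (X : lit -> Prop) : A -> Prop := fun a => X (LPos (GAct i a)).

Definition TS_init (B : bcDesc) (s : bstate) : Prop :=
  exists X, stable (prog B 0) X /\ s = sigma 0 X.

Inductive TS_state (B : bcDesc) : bstate -> Prop :=
  | TSs0 X : stable (prog B 0) X -> TS_state B (sigma 0 X)
  | TSsS l X : stable (prog B l.+1) X -> TS_state B (sigma l X) ->
               TS_state B (sigma l.+1 X).

Definition TS_trans (B : bcDesc) (s : bstate) (lab : A -> Prop) (s' : bstate) : Prop :=
  exists l X, stable (prog B l.+1) X /\ TS_state B (sigma l X) /\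
    s = sigma l X /\ lab = label l X /\ s' = sigma l.+1 X.

End BC.

Section Encoding.
Variables (Var Val : eqType) (DomI Place Trans : finType).
Variable W : dawnet Var Val DomI Place Trans.

Inductive bcF := BFv (x : VarP W) | BFp (p : Place) | BFtrans.
Inductive bval := VNull | VD (d : Val) | VB (b : bool).

Definition bcdom (f : bcF) : seq bval :=
  match f with
  | BFv x => VNull :: [seq VD d | d <- adm W (sval x)]
  | _ => [:: VB true; VB false]
  end.

(* terms of a DNF characterisation: (v, Some o) is v = o, (v, None) is ~def(v) *)
Definition dlit := (VarP W * option Val)%type.

Definition dlit_holds (eta : assignment Var Val) (l : dlit) : Prop :=
  match l.2 with
  | Some o => eta (sval l.1) = Some o
  | None => eta (sval l.1) = None
  end.

Definition dnf_char (c : seq (seq dlit)) (g : guard Var Val) : Prop :=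
  forall eta, asg_ok (dmodel W) eta ->
    (holds (dmodel W) eta g <->
     exists cl, List.In cl c /\ forall l, List.In l cl -> dlit_holds eta l).

Definition trlit (l : dlit) : atom bcF bval :=
  match l.2 with Some o => (BFv l.1, VD o) | None => (BFv l.1, VNull) end.

Variable dnf : Trans -> seq (seq dlit).

Definition bc_dynamic (h : option (atom bcF bval)) (aft : seq (atom bcF bval + Trans))
  (ifc : seq (atom bcF bval)) : Prop :=
  (* inertia of variables *)
  (exists x o, List.In o (bcdom (BFv x)) /\
     h = Some (BFv x, o) /\ aft = [:: inl (BFv x, o)] /\ ifc = [:: (BFv x, o)]) \/
  (* inertia of places *)
  (exists p b, h = Some (BFp p, VB b) /\ aft = [:: inl (BFp p, VB b)] /\ ifc = [:: (BFp p, VB b)]) \/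
  (exists t p, pre W t p && ~~ post W t p /\
     h = Some (BFp p, VB false) /\ aft = [:: inr t] /\ ifc = [::]) \/
  (exists t p, post W t p && ~~ pre W t p /\
     h = Some (BFp p, VB true) /\ aft = [:: inr t] /\ ifc = [::]) \/
  (exists t x s d, wr W t (sval x) = Some s /\ d \in s /\
     h = Some (BFv x, VD d) /\ aft = [:: inr t] /\ ifc = [:: (BFv x, VD d)]) \/
  (exists t x, wr W t (sval x) = Some [::] /\
     h = Some (BFv x, VNull) /\ aft = [:: inr t] /\ ifc = [::]) \/
  (exists t x s o, wr W t (sval x) = Some s /\ s <> [::] /\
     (o = VNull \/ exists d, d \in adm W (sval x) /\ d \notin s /\ o = VD d) /\
     h = None /\ aft = [:: inr t] /\ ifc = [:: (BFv x, o)]) \/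
  (exists t s, t <> s /\ h = None /\ aft = [:: inr t; inr s] /\ ifc = [::]) \/
  (exists t p, pre W t p /\ h = None /\ aft = [:: inr t; inl (BFp p, VB false)] /\ ifc = [::]) \/
  (exists t, h = Some (BFtrans, VB true) /\ aft = [:: inr t] /\ ifc = [::]) \/
  (* guards *)
  (exists t cl, ~ guard_true (dmodel W) (gd W t) /\ List.In cl (dnf t) /\
     h = None /\ aft = inr t :: [seq inl (trlit l) | l <- cl] /\ ifc = [::]).

Definition bc_init (a : atom bcF bval) : Prop :=
  a = (BFp (pstart W), VB true) \/
  (exists p, p != pstart W /\ a = (BFp p, VB false)) \/
  (exists x, a = (BFv x, VNull)) \/
  a = (BFtrans, VB true).

Definition bc : bcDesc bcF Trans bval :=
  BCDesc bcdom (fun _ _ _ => False) bc_dynamic bc_init.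

End Encoding.

(* Main.v *)
Require Import Defs.
From mathcomp Require Import all_boot.
From Stdlib Require Import Classical FunctionalExtensionality PropExtensionality IndefiniteDescription.
Set Implicit Arguments. Unset Strict Implicit. Unset Printing Implicit Defensive.

Lemma In_map (T1 T2 : Type) (f : T1 -> T2) (s : seq T1) y :
  List.In y (map f s) <-> exists x, List.In x s /\ y = f x.
Proof.
elim: s => [|a s IH] /=; first by split=> // [[x []]].
split.
- case=> [<-|H]; first by exists a; auto.
  by have [x [Hx ->]] := proj1 IH H; exists x; auto.
- case=> x [[<-|Hx] E]; first by left; rewrite E.
  by right; apply: (proj2 IH); exists x.
Qed.

Lemma In_mem (T : eqType) (x : T) (s : seq T) : x \in s -> List.In x s.
Proof.
elim: s => [|a s IH] //=; rewrite in_cons => /orP [/eqP ->|/IH]; auto.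
Qed.

Notation GF i f v := (@GFl _ _ _ i f v).
Notation GT i a := (@gat _ _ _ i a).
Notation GA i a := (@GAct _ _ _ i a).
Notation GH i h := (@ghead _ _ _ i h).

Section ASP.
Variables (F A Vl : Type) (B : bcDesc F A Vl).

Lemma asp_support k X L : stable (prog B k) X -> X L ->
  exists r, prog B k r /\ List.In L (rhead r) /\
    (forall L', List.In L' (rnaf r) -> ~ X L') /\
    (forall L', List.In L' (rpos r) -> X L').
Proof.
move=> [Hcons [Hcl Hmin]] HL.
apply: NNPP => Hno.
pose Y := fun L' => X L' /\ L' <> L.
have HY : closed_reduct (prog B k) X Y.
  move=> r Hr Hn Hp.
  have [L0 [HL0 XL0]] := Hcl r Hr Hn (fun L' H => (Hp L' H).1).
  case: (classic (L0 = L)) => [E|NE]; last by exists L0.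
  exfalso; apply: Hno; exists r; split=> //; split; first by rewrite -E.
  by split=> // L' H; case: (Hp L' H).
have := Hmin Y (fun L' H => H.1) HY L HL.
by case.
Qed.

Lemma cl_dyn k X Y h b c i : closed_reduct (prog B k) X Y -> bdynamic B h b c -> i < k ->
  (forall a, List.In a c -> ~ X (LNeg (GT i.+1 a))) ->
  (forall x, List.In x b -> Y (LPos (gaft i x))) ->
  exists L, List.In L (GH i.+1 h) /\ Y L.
Proof.
move=> Hc Hd Hi Hn Hp.
apply: (Hc (Rule (GH i.+1 h) [seq LPos (gaft i x) | x <- b] [seq LNeg (GT i.+1 x) | x <- c])).
- by right; left; exists h, b, c, i.
- by move=> L /In_map [x [Hx ->]]; apply: Hn.
- by move=> L /In_map [x [Hx ->]]; apply: Hp.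
Qed.

Lemma cl_dyn_none k X Y b c i : closed_reduct (prog B k) X Y -> bdynamic B None b c -> i < k ->
  (forall a, List.In a c -> ~ X (LNeg (GT i.+1 a))) ->
  (forall x, List.In x b -> Y (LPos (gaft i x))) -> False.
Proof. by move=> Hc Hd Hi Hn Hp; case: (cl_dyn Hc Hd Hi Hn Hp) => L []. Qed.

Lemma cl_dyn_some k X Y a b c i : closed_reduct (prog B k) X Y -> bdynamic B (Some a) b c -> i < k ->
  (forall a, List.In a c -> ~ X (LNeg (GT i.+1 a))) ->
  (forall x, List.In x b -> Y (LPos (gaft i x))) -> Y (LPos (GT i.+1 a)).
Proof. by move=> Hc Hd Hi Hn Hp; case: (cl_dyn Hc Hd Hi Hn Hp) => L [[<-|[]]]. Qed.

Lemma cl_init k X Y a : closed_reduct (prog B k) X Y -> binit B a -> Y (LPos (GT 0 a)).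
Proof.
move=> Hc Ha.
have Hp : prog B k (Rule [:: LPos (GT 0 a)] [::] [::]) by right; right; left; exists a.
by have [L [[<-|[]] //]] := Hc _ Hp (fun _ H => match H with end) (fun _ H => match H with end).
Qed.

Lemma cl_choice k X Y f v : closed_reduct (prog B k) X Y -> List.In v (bdom B f) ->
  Y (LPos (GF 0 f v)) \/ Y (LNeg (GF 0 f v)).
Proof.
move=> Hc Hv.
have Hp : prog B k (Rule [:: LPos (GF 0 f v); LNeg (GF 0 f v)] [::] [::]).
  by do 3 right; left; exists f, v.
by have [L [[<-|[<-|[]]] HL]] := Hc _ Hp (fun _ H => match H with end) (fun _ H => match H with end); auto.
Qed.

Lemma cl_achoice k X Y a i : closed_reduct (prog B k) X Y -> i < k ->
  Y (LPos (GA i a)) \/ Y (LNeg (GA i a)).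
Proof.
move=> Hc Hi.
have Hp : prog B k (Rule [:: LPos (GA i a); LNeg (GA i a)] [::] [::]).
  by do 4 right; left; exists a, i.
by have [L [[<-|[<-|[]]] HL]] := Hc _ Hp (fun _ H => match H with end) (fun _ H => match H with end); auto.
Qed.

Lemma cl_exist k X f i : closed_reduct (prog B k) X X -> i <= k ->
  exists v, List.In v (bdom B f) /\ X (LPos (GF i f v)).
Proof.
move=> Hc Hi; apply: NNPP => Hno.
have Hp : prog B k (Rule [::] [::] [seq LPos (GF i f v) | v <- bdom B f]).
  by do 5 right; left; exists f, i.
have Hn : forall L, List.In L [seq LPos (GF i f v) | v <- bdom B f] -> ~ X L.
  move=> L /In_map [v [Hv ->]] HX; apply: Hno; by exists v.
by have [L [[]]] := Hc _ Hp Hn (fun _ H => match H with end).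
Qed.

Lemma cl_neg k X Y f v w i : closed_reduct (prog B k) X Y -> i <= k ->
  List.In v (bdom B f) -> List.In w (bdom B f) -> v <> w ->
  Y (LPos (GF i f w)) -> Y (LNeg (GF i f v)).
Proof.
move=> Hc Hi Hv Hw Hvw HY.
have Hp : prog B k (Rule [:: LNeg (GF i f v)] [:: LPos (GF i f w)] [::]).
  by do 6 right; exists f, v, w, i.
have Hq : forall L, List.In L [:: LPos (GF i f w)] -> Y L by move=> L [<-|[]].
by have [L [[<-|[]] //]] := Hc _ Hp (fun _ H => match H with end) Hq.
Qed.

Lemma stable_uniq k X f v w i : stable (prog B k) X -> i <= k ->
  List.In v (bdom B f) -> List.In w (bdom B f) ->
  X (LPos (GF i f v)) -> X (LPos (GF i f w)) -> v = w.
Proof.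
move=> [Hcons [Hcl _]] Hi Hv Hw Xv Xw; apply: NNPP => Hvw.
by apply: (Hcons (GF i f v)); split=> //; apply: (cl_neg Hcl Hi Hv Hw Hvw).
Qed.

End ASP.

Lemma mem_In' (T : eqType) (x : T) (s : seq T) : List.In x s -> x \in s.
Proof. elim: s => [|a s IH] //= [->|/IH H]; rewrite in_cons ?eqxx ?H ?orbT //. Qed.

Section Main.
Variables (Var Val : eqType) (DomI Place Trans : finType).
Variable W : dawnet Var Val DomI Place Trans.
Variable dnf : Trans -> seq (seq (dlit W)).
Hypothesis wfW : wf_dawnet W.
Hypothesis safeW : one_safe W.
Hypothesis dnfW : forall t, ~ guard_true (dmodel W) (gd W t) -> dnf_char (dnf t) (GNot (gd W t)).

Local Notation B := (bc dnf).
Local Notation VN := (@VNull Val).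
Local Notation VBb b := (@VB Val b).
Local Notation BT := (@BFtrans _ _ _ _ _ W).
Local Notation BP p := (@BFp _ _ _ _ _ W p).
Local Notation ms := (mstate Var Val Place).
Local Notation GF i f v := (@GFl _ _ _ i f v).
Local Notation GT i a := (@gat _ _ _ i a).
Local Notation GA i a := (@GAct _ _ _ i a).
Local Notation lt := (lit (bcF W) Trans (bval Val)).

Definition encopt (o : option Val) : bval Val :=
  match o with None => VN | Some d => VD d end.
Definition encf (s : ms) (f : bcF W) : bval Val :=
  match f with
  | BFv x => encopt (s.2 (sval x))
  | BFp p => VBb (0 < s.1 p)
  | BFtrans => VBb true
  end.
Definition encS (s : ms) : bstate (bcF W) (bval Val) := fun f o => o = encf s f.
Definition encL (t : Trans) : Trans -> Prop := fun a => a = t.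

Lemma wr_adm t v s d : wr W t v = Some s -> d \in s -> d \in adm W v.
Proof.
move=> Hw Hd; apply/flattenP; exists s => //.
have -> : s = odflt [::] (wr W t v) by rewrite Hw.
by apply: (map_f (fun t => odflt [::] (wr W t v))); rewrite mem_enum.
Qed.

Lemma notVp v t : ~~ inVp W v -> wr W t v = None.
Proof.
move/existsPn/(_ t); rewrite negb_or => /andP [H _].
by move: H; case: (wr W t v).
Qed.

Lemma inVp_wr v t s : wr W t v = Some s -> inVp W v.
Proof. by move=> Hw; apply/existsP; exists t; rewrite Hw. Qed.

Definition inv (s : ms) :=
  (forall v, ~~ inVp W v -> s.2 v = None) /\
  (forall v d, s.2 v = Some d -> d \in adm W v) /\
  asg_ok (dmodel W) s.2.

Lemma vf_M s t s' p : valid_firing W s t s' ->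
  s'.1 p = (if pre W t p && ~~ post W t p then s.1 p - 1
            else if post W t p && ~~ pre W t p then s.1 p + 1 else s.1 p).
Proof. by case: s s' => [M eta] [M' eta'] [_ [_ [H _]]]. Qed.

Lemma vf_pre s t s' p : valid_firing W s t s' -> pre W t p -> 0 < s.1 p.
Proof. by case: s s' => [M eta] [M' eta'] [H _]; apply: H. Qed.

Lemma vf_gd s t s' : valid_firing W s t s' -> holds (dmodel W) s.2 (gd W t).
Proof. by case: s s' => [M eta] [M' eta'] [_ [H _]]. Qed.

Lemma vf_eta s t s' v : valid_firing W s t s' ->
  match wr W t v with
  | None => s'.2 v = s.2 v
  | Some [::] => s'.2 v = None
  | Some l => exists d, d \in l /\ s'.2 v = Some d
  end.
Proof. by case: s s' => [M eta] [M' eta'] [_ [_ [_ H]]]; apply: H. Qed.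

Lemma vf_intro s t s' :
  (forall p, pre W t p -> 0 < s.1 p) -> holds (dmodel W) s.2 (gd W t) ->
  (forall p, s'.1 p = (if pre W t p && ~~ post W t p then s.1 p - 1
            else if post W t p && ~~ pre W t p then s.1 p + 1 else s.1 p)) ->
  (forall v, match wr W t v with
  | None => s'.2 v = s.2 v
  | Some [::] => s'.2 v = None
  | Some l => exists d, d \in l /\ s'.2 v = Some d
  end) -> valid_firing W s t s'.
Proof. by case: s s' => [M eta] [M' eta'] /= *; do 3 (split=> //). Qed.

Lemma reach_inv s : reachable W s -> inv s.
Proof.
elim=> [|s1 t s2 _ [IH1 [IH2 IH3]] Hv].
  by split=> //=; split.
split; [|split].
- move=> v Hv'; have := vf_eta v Hv; rewrite (notVp t Hv') => ->; exact: IH1.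
- move=> v d; have := vf_eta v Hv; case E: (wr W t v) => [[|d0 s0]|].
  + by move=> ->.
  + by move=> [d' [Hd' ->]] [<-]; apply: (wr_adm E).
  + by move=> -> /IH2.
- move=> v d; have := vf_eta v Hv; case E: (wr W t v) => [[|d0 s0]|].
  + by move=> ->.
  + by move=> [d' [Hd' ->]] [<-]; apply: (wfW.2.2.1 _ _ _ E).
  + by move=> -> /IH3.
Qed.

Lemma encf_dom s f : reachable W s -> List.In (encf s f) (bcdom f).
Proof.
move=> /reach_inv [_ [H _]]; case: f => [x|p|] /=.
- case E: (s.2 (sval x)) => [d|] /=; last by left.
  right; apply/In_map; exists d; split=> //; apply: In_mem; exact: H E.
- by case: (0 < s.1 p); [left|right; left].
- by left.
Qed.

Lemma encp_next s t s' p : reachable W s -> valid_firing W s t s' ->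
  encf s' (BP p) = (if pre W t p && ~~ post W t p then VBb false
     else if post W t p && ~~ pre W t p then VBb true else encf s (BP p)).
Proof.
move=> Hr Hv /=; rewrite (vf_M p Hv).
case E1: (pre W t p && ~~ post W t p).
  have H1 := vf_pre Hv (andP E1).1; have H2 := safeW Hr p.
  by have -> : s.1 p = 1 by apply/eqP; rewrite eqn_leq H1 H2.
by case: (post W t p && ~~ pre W t p); rewrite ?addn1.
Qed.

Lemma encv_dom (x : VarP W) o : List.In o (bcdom (BFv x)) ->
  o = VN \/ exists d, d \in adm W (sval x) /\ o = VD d.
Proof.
case=> [<-|/In_map [d [Hd ->]]]; first by left.
by right; exists d; split=> //; apply: mem_In'.
Qed.

Lemma VB_dom (f : bcF W) b : (forall x, f <> BFv x) -> List.In (VBb b) (bcdom f).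
Proof.
case: f => [x /(_ x) []//|p|] _ /=; by case: b; [left|right; left].
Qed.


Lemma inv_pos k r i f o : prog B k r -> List.In (LPos (GF i f o)) (rhead r) ->
  (i = 0 /\ (bc_init (f, o) \/ List.In o (bcdom f))) \/
  (exists j b c, i = j.+1 /\ j < k /\ bc_dynamic dnf (Some (f, o)) b c /\
     r = Rule [:: LPos (GF j.+1 f o)] [seq LPos (gaft j x) | x <- b] [seq LNeg (GT j.+1 x) | x <- c]).
Proof.
case=> [[h [b [c [i' [[] _]]]]]|].
case=> [[h [b [c [j [Hd [Hj ->]]]]]]|].
  case: h Hd => [[f0 o0]|] Hd /=; last by [].
  case=> [[<- <- <-]|[]]; right; exists j, b, c; do 2 split=> //.
case=> [[[f0 o0] [Ha ->]]|].
  by case=> [[<- <- <-]|[]]; left; split=> //; left.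
case=> [[f' [v [Hv ->]]]|].
  by case=> [[<- <- <-]|[//|[]]]; left; split=> //; right.
case=> [[a [i' [_ ->]]]|].
  by case=> [//|[//|[]]].
case=> [[f' [i' [_ ->]]]|].
  by [].
case=> [f' [v [w [i' [_ [_ [_ [_ ->]]]]]]]].
by case=> [//|[]].
Qed.

Lemma dyn_pos f o b c : bc_dynamic dnf (Some (f, o)) b c ->
  (exists x, f = BFv x /\ List.In o (bcdom (BFv x)) /\ b = [:: inl (BFv x, o)] /\ c = [:: (BFv x, o)]) \/
  (exists p bb, f = BP p /\ o = VBb bb /\ b = [:: inl (BP p, VBb bb)] /\ c = [:: (BP p, VBb bb)]) \/
  (exists t p, pre W t p && ~~ post W t p /\ f = BP p /\ o = VBb false /\ b = [:: inr t]) \/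
  (exists t p, post W t p && ~~ pre W t p /\ f = BP p /\ o = VBb true /\ b = [:: inr t]) \/
  (exists t x s d, wr W t (sval x) = Some s /\ d \in s /\ f = BFv x /\ o = VD d /\ b = [:: inr t] /\ c = [:: (BFv x, VD d)]) \/
  (exists t x, wr W t (sval x) = Some [::] /\ f = BFv x /\ o = VN /\ b = [:: inr t]) \/
  (exists t, f = BT /\ o = VBb true /\ b = [:: inr t]).
Proof.
case=> [[x [o' [Hin [[-> ->] [-> ->]]]]]|]; first by left; exists x.
case=> [[p [bb [[-> ->] [-> ->]]]]|]; first by right; left; exists p, bb.
case=> [[t [p [Hp [[-> ->] [-> _]]]]]|]; first by do 2 right; left; exists t, p.
case=> [[t [p [Hp [[-> ->] [-> _]]]]]|]; first by do 3 right; left; exists t, p.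
case=> [[t [x [s [d [Hw [Hd [[-> ->] [-> ->]]]]]]]]|].
  by do 4 right; left; exists t, x, s, d.
case=> [[t [x [Hw [[-> ->] [-> _]]]]]|]; first by do 5 right; left; exists t, x.
case=> [[t [x [s [o' [_ [_ [_ [Hn _]]]]]]]]|]; first by discriminate Hn.
case=> [[t [s [_ [Hn _]]]]|]; first by discriminate Hn.
case=> [[t [p [_ [Hn _]]]]|]; first by discriminate Hn.
case=> [[t [[-> ->] [-> _]]]|]; first by do 6 right; exists t.
by case=> [t [cl [_ [_ [Hn _]]]]]; discriminate Hn.
Qed.

Lemma supp_cases k X j f o : stable (prog B k) X -> X (LPos (GF j.+1 f o)) -> j < k /\ (
  (exists x, f = BFv x /\ List.In o (bcdom (BFv x)) /\ X (LPos (GF j (BFv x) o))) \/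
  (exists p bb, f = BP p /\ o = VBb bb /\ X (LPos (GF j (BP p) (VBb bb)))) \/
  (exists t p, pre W t p && ~~ post W t p /\ f = BP p /\ o = VBb false /\ X (LPos (GA j t))) \/
  (exists t p, post W t p && ~~ pre W t p /\ f = BP p /\ o = VBb true /\ X (LPos (GA j t))) \/
  (exists t x s d, wr W t (sval x) = Some s /\ d \in s /\ f = BFv x /\ o = VD d /\ X (LPos (GA j t))) \/
  (exists t x, wr W t (sval x) = Some [::] /\ f = BFv x /\ o = VN /\ X (LPos (GA j t))) \/
  (exists t, f = BT /\ o = VBb true /\ X (LPos (GA j t)))).
Proof.
move=> Hst HX.
have [r [Hr [Hin [Hn Hp]]]] := asp_support Hst HX.
case: (inv_pos Hr Hin) => [[//]|[j' [b [c [[Ej] [Hj [Hd Er]]]]]]].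
subst r j'; split=> //.
have Hb : forall x, List.In x b -> X (LPos (gaft j x)).
  by move=> x Hx; apply: Hp; apply/In_map; exists x.
case: (dyn_pos Hd).
  by case=> x [-> [Hin' [Eb _]]]; left; exists x; do 2 split=> //; apply: (Hb (inl (BFv x, o))); rewrite Eb; left.
case.
  by case=> p [bb [-> [-> [Eb _]]]]; right; left; exists p, bb; do 2 split=> //; apply: (Hb (inl (BP p, VBb bb))); rewrite Eb; left.
case.
  by case=> t [p [H [-> [-> Eb]]]]; do 2 right; left; exists t, p; do 3 split=> //; apply: (Hb (inr t)); rewrite Eb; left.
case.
  by case=> t [p [H [-> [-> Eb]]]]; do 3 right; left; exists t, p; do 3 split=> //; apply: (Hb (inr t)); rewrite Eb; left.
case.
  by case=> t [x [s [d [H1 [H2 [-> [-> [Eb _]]]]]]]]; do 4 right; left; exists t, x, s, d; do 4 split=> //; apply: (Hb (inr t)); rewrite Eb; left.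
case.
  by case=> t [x [H1 [-> [-> Eb]]]]; do 5 right; left; exists t, x; do 3 split=> //; apply: (Hb (inr t)); rewrite Eb; left.
by case=> t [-> [-> Eb]]; do 6 right; exists t; do 2 split=> //; apply: (Hb (inr t)); rewrite Eb; left.
Qed.

Lemma init_dom (f : bcF W) o : bc_init (f, o) -> List.In o (bcdom f).
Proof.
case=> [[-> ->]|[[p [_ [-> ->]]]|[[x [-> ->]]|[-> ->]]]] /=; by auto.
Qed.

Lemma pos_dom k X i f o : stable (prog B k) X -> X (LPos (GF i f o)) -> List.In o (bcdom f).
Proof.
move=> Hst HX.
have [r [Hr [Hin _]]] := asp_support Hst HX.
case: (inv_pos Hr Hin) => [[_ [/init_dom|]]|[j [b [c [_ [_ [Hd _]]]]]]] //.
case: (dyn_pos Hd).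
  by case=> x [-> [H _]].
case. by case=> p [bb [-> [-> _]]]; apply: VB_dom.
case. by case=> t [p [_ [-> [-> _]]]]; apply: VB_dom.
case. by case=> t [p [_ [-> [-> _]]]]; apply: VB_dom.
case. case=> t [x [s [d [H1 [H2 [-> [-> _]]]]]]]; right; apply/In_map; exists d; split=> //.
  by apply: In_mem; apply: (wr_adm H1).
case. by case=> t [x [_ [-> [-> _]]]]; left.
by case=> t [-> [-> _]]; left.
Qed.

Lemma uniq_val k X i f o o' : stable (prog B k) X -> i <= k ->
  X (LPos (GF i f o)) -> X (LPos (GF i f o')) -> o = o'.
Proof.
move=> Hst Hi H1 H2.
exact: (stable_uniq (B:=B) Hst Hi (pos_dom Hst H1) (pos_dom Hst H2) H1 H2).
Qed.


Definition hist n (st : nat -> ms) (ac : nat -> option Trans) :=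
  st 0 = init_state W /\
  forall i, i < n -> exists t, ac i = Some t /\ valid_firing W (st i) t (st i.+1).

Lemma hist_reach n st ac : hist n st ac -> forall i, i <= n -> reachable W (st i).
Proof.
move=> [E0 H]; elim=> [|i IH] Hi; first by rewrite E0; constructor.
have [t [_ Hv]] := H i Hi; exact: reachS (IH (ltnW Hi)) Hv.
Qed.

Definition Xh n (st : nat -> ms) (ac : nat -> option Trans) : lt -> Prop := fun L =>
  match L with
  | LPos (GFl i f o) => i <= n /\ o = encf (st i) f
  | LNeg (GFl i f o) => i <= n /\ List.In o (bcdom f) /\ o <> encf (st i) f
  | LPos (GAct i a) => i < n /\ ac i = Some a
  | LNeg (GAct i a) => i < n /\ ac i <> Some a
  end.

Lemma Xh_stable n st ac : hist n st ac -> stable (prog B n) (Xh n st ac).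
Proof.
move=> Hh; have Hr := hist_reach Hh.
have Hcons : consistent (Xh n st ac).
  case=> [i f o|i a] [] /=; [move=> [_ E] [_ [_ NE]] | move=> [_ E] [_ NE]]; by apply: NE.
have Hcl : closed_reduct (prog B n) (Xh n st ac) (Xh n st ac).
  move=> r Hr0 Hn Hp.
  case: Hr0 => [[h [b [c [i [[] _]]]]]|].
  case=> [[h [b [c [i [Hd [Hi Er]]]]]]|].
    subst r.
    have Hn' : forall a, List.In a c -> ~ (Xh n st ac) (LNeg (GT i.+1 a)).
      by move=> a Ha; apply: Hn; apply/In_map; exists a.
    have Hp' : forall x, List.In x b -> (Xh n st ac) (LPos (gaft i x)).
      by move=> x Hx; apply: Hp; apply/In_map; exists x.
    have [t [Eac Hv]] := (proj2 Hh) i Hi.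
    have Hri := Hr i (ltnW Hi).
    have Ht : forall t', (Xh n st ac) (LPos (GA i t')) -> t' = t.
      by move=> t' [_]; rewrite Eac => [[->]].
    have Hnaf : forall f o, List.In o (bcdom f) -> ~ (Xh n st ac) (LNeg (GF i.+1 f o)) -> o = encf (st i.+1) f.
      by move=> f o Ho HX; apply: NNPP => Hne; apply: HX.
    move: Hn' Hp'; case: Hd => [[x [o [Hin [-> [-> ->]]]]] Hn' Hp'|].
      exists (LPos (GF i.+1 (BFv x) o)); split; first by left.
      split=> //; apply: Hnaf => //; apply: (Hn' (BFv x, o)); by left.
    case=> [[p [bb [-> [-> ->]]]] Hn' Hp'|].
      exists (LPos (GF i.+1 (BP p) (VBb bb))); split; first by left.
      split=> //; apply: Hnaf; first by apply: VB_dom.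
      apply: (Hn' (BP p, VBb bb)); by left.
    case=> [[t' [p [Hp0 [-> [-> ->]]]]] Hn' Hp'|].
      have Et := Ht t' (Hp' (inr t') (or_introl erefl)); subst t'.
      exists (LPos (GF i.+1 (BP p) (VBb false))); split; first by left.
      by split=> //; rewrite (encp_next p Hri Hv) Hp0.
    case=> [[t' [p [Hp0 [-> [-> ->]]]]] Hn' Hp'|].
      have Et := Ht t' (Hp' (inr t') (or_introl erefl)); subst t'.
      exists (LPos (GF i.+1 (BP p) (VBb true))); split; first by left.
      by split=> //; rewrite (encp_next p Hri Hv); case/andP: Hp0 => -> /negbTE ->.
    case=> [[t' [x [s0 [d [Hw [Hd [-> [-> ->]]]]]]]] Hn' Hp'|].
      have Et := Ht t' (Hp' (inr t') (or_introl erefl)); subst t'.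
      exists (LPos (GF i.+1 (BFv x) (VD d))); split; first by left.
      split=> //; apply: Hnaf; last by apply: (Hn' (BFv x, VD d)); left.
      by right; apply/In_map; exists d; split=> //; apply: In_mem; apply: (wr_adm Hw).
    case=> [[t' [x [Hw [-> [-> ->]]]]] Hn' Hp'|].
      have Et := Ht t' (Hp' (inr t') (or_introl erefl)); subst t'.
      exists (LPos (GF i.+1 (BFv x) VN)); split; first by left.
      by split=> //=; have := vf_eta (sval x) Hv; rewrite Hw => ->.
    case=> [[t' [x [s0 [o [Hw [Hs [Ho [-> [-> ->]]]]]]]]] Hn' Hp'|].
      have Et := Ht t' (Hp' (inr t') (or_introl erefl)); subst t'.
      exfalso.
      have Hin : List.In o (bcdom (BFv x)).
        case: Ho => [->|[d [Hd [_ ->]]]]; first by left.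
        by right; apply/In_map; exists d; split=> //; apply: In_mem.
      have Eo := Hnaf _ _ Hin (Hn' (BFv x, o) (or_introl erefl)).
      move: Eo => /=; have := vf_eta (sval x) Hv; rewrite Hw.
      case: s0 Hw Hs Ho => [//|d0 s0] Hw _ Ho [d' [Hd' ->]] /= Eo.
      case: Ho => [E|[d [_ [Hd E]]]]; rewrite E in Eo; first by [].
      by case: Eo => Ed; rewrite Ed Hd' in Hd.
    case=> [[t1 [t2 [Hne [-> [-> ->]]]]] Hn' Hp'|].
      exfalso; apply: Hne.
      by rewrite (Ht t1 (Hp' (inr t1) (or_introl erefl))) (Ht t2 (Hp' (inr t2) (or_intror (or_introl erefl)))).
    case=> [[t' [p [Hp0 [-> [-> ->]]]]] Hn' Hp'|].
      have Et := Ht t' (Hp' (inr t') (or_introl erefl)); subst t'.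
      exfalso; have [_ /= E] := Hp' _ (or_intror (or_introl erefl)).
      by move: E (vf_pre Hv Hp0) => [] <-.
    case=> [[t' [-> [-> ->]]] Hn' Hp'|].
      by exists (LPos (GF i.+1 BT (VBb true))); split; first by left.
    case=> [t' [cl [Hng [Hcl [-> [-> ->]]]]]] Hn' Hp'.
    have Et := Ht t' (Hp' (inr t') (or_introl erefl)); subst t'.
    exfalso.
    have [_ [_ Hok]] := reach_inv Hri.
    have HN : holds (dmodel W) (st i).2 (GNot (gd W t)).
      apply: (proj2 (dnfW Hng Hok)); exists cl; split=> // l Hl.
      have := Hp' (inl (trlit l)) (or_intror (proj2 (In_map _ _ _) (ex_intro _ l (conj Hl erefl)))).
      rewrite /dlit_holds /trlit; case: l Hl => x [o|] Hl /= [_]; case: ((st i).2 (sval x)) => [d|] //=.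
      by case=> ->.
    exact: HN (vf_gd Hv).
  case=> [[a [Ha ->]]|].
    exists (LPos (GT 0 a)); split; first by left.
    case: a Ha => f o Ha /=; split=> //; rewrite (proj1 Hh).
    case: Ha => [[-> ->]|[[p [Hp0 [-> ->]]]|[[x [-> ->]]|[-> ->]]]] //=.
    + by rewrite eqxx.
    + by rewrite (negbTE Hp0).
  case=> [[f [v [Hv ->]]]|].
    case: (classic (v = encf (st 0) f)) => E.
      by exists (LPos (GF 0 f v)); split; [left|].
    by exists (LNeg (GF 0 f v)); split; [right; left|].
  case=> [[a [i [Hi ->]]]|].
    case: (classic (ac i = Some a)) => E.
      by exists (LPos (GA i a)); split; [left|].
    by exists (LNeg (GA i a)); split; [right; left|].
  case=> [[f [i [Hi Er]]]|].
    subst r; exfalso; apply: (Hn (LPos (GF i f (encf (st i) f)))); last by split.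
    by rewrite /=; apply/In_map; exists (encf (st i) f); split=> //; apply: encf_dom; apply: Hr.
  case=> [f [v [w [i [Hi [Hv [Hw [Hvw Er]]]]]]]].
  subst r.
  have [_ Ew] := Hp (LPos (GF i f w)) (or_introl erefl).
  exists (LNeg (GF i f v)); split; first by left.
  by split=> //; split=> //; rewrite -Ew.
split=> //; split=> //.
move=> Y HYX HY.
have Pick : forall g, (Y (LPos g) \/ Y (LNeg g)) ->
    ((Xh n st ac) (LPos g) -> Y (LPos g)) /\ ((Xh n st ac) (LNeg g) -> Y (LNeg g)).
  move=> g [H|H]; split=> // HX; exfalso; apply: (Hcons g); split=> //; by apply: HYX.
have Hact : forall i a, i < n ->
    ((Xh n st ac) (LPos (GA i a)) -> Y (LPos (GA i a))) /\ ((Xh n st ac) (LNeg (GA i a)) -> Y (LNeg (GA i a))).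
  by move=> i a Hi; apply: Pick; exact: (cl_achoice (B:=B) a HY Hi).
have Hlev : forall i, i <= n -> forall f, Y (LPos (GF i f (encf (st i) f))).
  elim=> [|i IH] Hi f.
    have := cl_choice (B:=B) HY (encf_dom f (Hr 0 Hi)).
    by case=> // HN; exfalso; have [_ [_ []]] := HYX _ HN.
  have IH' := IH (ltnW Hi).
  have [t [Eac Hv]] := proj2 Hh i Hi.
  have Hri := Hr i (ltnW Hi).
  have Yt : Y (LPos (GA i t)) by apply: (proj1 (Hact i t Hi)); split.
  have Hb : forall z, List.In z [:: inr t] -> Y (LPos (gaft i z)) by move=> z [<-|[]].
  case: f => [x|p|].
  - case E: (wr W t (sval x)) => [[|d0 s0]|].
    + have Hd : bc_dynamic dnf (Some (BFv x, VN)) [:: inr t] [::].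
        by do 5 right; left; exists t, x.
      have := cl_dyn_some HY Hd Hi (fun _ H => match H with end) Hb.
      by rewrite /=; have := vf_eta (sval x) Hv; rewrite E => ->.
    + have := vf_eta (sval x) Hv; rewrite E => [[d [Hd Ee]]].
      have Hdy : bc_dynamic dnf (Some (BFv x, VD d)) [:: inr t] [:: (BFv x, VD d)].
        by do 4 right; left; exists t, x, (d0 :: s0), d.
      have Hn : forall a, List.In a [:: (BFv x, VD d)] -> ~ (Xh n st ac) (LNeg (GT i.+1 a)).
        by move=> a [<-|[]] [_ [_ NE]]; apply: NE; rewrite /= Ee.
      have := cl_dyn_some HY Hdy Hi Hn Hb.
      by rewrite /= Ee.
    + have := vf_eta (sval x) Hv; rewrite E => Ee.
      set o := encf (st i) (BFv x).
      have Hdy : bc_dynamic dnf (Some (BFv x, o)) [:: inl (BFv x, o)] [:: (BFv x, o)].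
        left; exists x, o; split=> //; exact: encf_dom.
      have Hn : forall a, List.In a [:: (BFv x, o)] -> ~ (Xh n st ac) (LNeg (GT i.+1 a)).
        by move=> a [<-|[]] [_ [_ NE]]; apply: NE; rewrite /o /= Ee.
      have Hb' : forall z, List.In z [:: inl (BFv x, o)] -> Y (LPos (gaft i z)).
        by move=> z [<-|[]]; apply: (IH' (BFv x)).
      have := cl_dyn_some HY Hdy Hi Hn Hb'.
      by rewrite /o /= Ee.
  - have := encp_next p Hri Hv.
    case E1: (pre W t p && ~~ post W t p); [|case E2: (post W t p && ~~ pre W t p)] => Ee; rewrite Ee.
    + have Hd : bc_dynamic dnf (Some (BP p, VBb false)) [:: inr t] [::].
        by do 2 right; left; exists t, p.
      exact: (cl_dyn_some HY Hd Hi (fun _ H => match H with end) Hb).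
    + have Hd : bc_dynamic dnf (Some (BP p, VBb true)) [:: inr t] [::].
        by do 3 right; left; exists t, p.
      exact: (cl_dyn_some HY Hd Hi (fun _ H => match H with end) Hb).
    + set bb := 0 < (st i).1 p.
      have Hdy : bc_dynamic dnf (Some (BP p, VBb bb)) [:: inl (BP p, VBb bb)] [:: (BP p, VBb bb)].
        by right; left; exists p, bb.
      have Hn : forall a, List.In a [:: (BP p, VBb bb)] -> ~ (Xh n st ac) (LNeg (GT i.+1 a)).
        by move=> a [<-|[]] [_ [_ NE]]; apply: NE; rewrite Ee.
      have Hb' : forall z, List.In z [:: inl (BP p, VBb bb)] -> Y (LPos (gaft i z)).
        by move=> z [<-|[]]; apply: (IH' (BP p)).
      exact: (cl_dyn_some HY Hdy Hi Hn Hb').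
  - have Hd : bc_dynamic dnf (Some (BT, VBb true)) [:: inr t] [::].
      by do 9 right; left; exists t.
    exact: (cl_dyn_some HY Hd Hi (fun _ H => match H with end) Hb).
move=> [[i f o|i a]|[i f o|i a]] HX.
- by have [Hi ->] := HX; apply: Hlev.
- by have [Hi _] := HX; apply: (proj1 (Hact i a Hi)).
- have [Hi [Ho Hne]] := HX.
  exact: (cl_neg HY Hi Ho (encf_dom f (Hr i Hi)) Hne (Hlev i Hi f)).
- by have [Hi _] := HX; apply: (proj2 (Hact i a Hi)).
Qed.


Lemma sigma_Xh n st ac i : i <= n -> sigma i (Xh n st ac) = encS (st i).
Proof.
move=> Hi; apply: functional_extensionality => f; apply: functional_extensionality => o.
apply: propositional_extensionality; rewrite /sigma /encS /=; split; first by case.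
by move=> ->.
Qed.

Lemma label_Xh n st ac i t : i < n -> ac i = Some t -> label i (Xh n st ac) = encL t.
Proof.
move=> Hi Ea; apply: functional_extensionality => a.
apply: propositional_extensionality; rewrite /label /encL /= Ea; split.
- by case=> _ [->].
- by move=> ->.
Qed.

Lemma hist_restrict n st ac : hist n.+1 st ac -> hist n st ac.
Proof. by case=> H0 H; split=> // i Hi; apply: H; apply: leqW. Qed.

Lemma hist_TS n st ac : hist n st ac -> TS_state B (encS (st n)).
Proof.
elim: n => [|n IH] Hh.
  rewrite -(sigma_Xh st ac (leqnn 0)); constructor; exact: Xh_stable Hh.
rewrite -(sigma_Xh st ac (leqnn n.+1)); apply: TSsS; first exact: Xh_stable Hh.
rewrite (sigma_Xh st ac (leqnSn n)); exact: IH (hist_restrict Hh).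
Qed.

Lemma sigma0 k X : stable (prog B k) X -> sigma 0 X = encS (init_state W).
Proof.
move=> Hst; have [_ [Hcl _]] := Hst.
have Hv : forall f, X (LPos (GF 0 f (encf (init_state W) f))).
  move=> f; apply: (cl_init (B:=B) (a := (f, encf (init_state W) f)) Hcl).
  case: f => [x|p|] /=.
  - by right; right; left; exists x.
    case: (eqVneq p (pstart W)) => [->|Hne]; first by left.
    by right; left; exists p.
  - by right; right; right.
apply: functional_extensionality => f; apply: functional_extensionality => o.
apply: propositional_extensionality; rewrite /sigma /encS; split.
- move=> H; exact: (uniq_val Hst (leq0n k) H (Hv f)).
- by move=> ->.
Qed.

Lemma step_analysis l X m : stable (prog B l.+1) X -> reachable W m -> sigma l X = encS m ->
  exists t m', valid_firing W m t m' /\ label l X = encL t /\ sigma l.+1 X = encS m'.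
Proof.
move=> Hst Hr Hs.
have HX : forall f o, X (LPos (GF l f o)) <-> o = encf m f.
  by move=> f o; have := equal_f (equal_f Hs f) o; rewrite /sigma /encS => ->.
have [Hcons [Hcl _]] := Hst.
have Hl := ltnSn l.
have [o0 [_ Ho0]] := cl_exist (B:=B) (BT) Hcl (leqnn l.+1).
have [_ Hc0] := supp_cases Hst Ho0.
have [t Xt] : exists t, X (LPos (GA l t)).
  case: Hc0 => [[x [E _]]|]; first by discriminate E.
  case=> [[p [bb [E _]]]|]; first by discriminate E.
  case=> [[t [p [_ [E _]]]]|]; first by discriminate E.
  case=> [[t [p [_ [E _]]]]|]; first by discriminate E.
  case=> [[t [x [s [d [_ [_ [E _]]]]]]]|]; first by discriminate E.
  case=> [[t [x [_ [E _]]]]|]; first by discriminate E.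
  by case=> t [_ [_ H]]; exists t.
have Hbt : forall z, List.In z [:: inr t] -> X (LPos (gaft l z)) by move=> z [<-|[]].
have Hat : forall t', X (LPos (GA l t')) -> t' = t.
  move=> t' H'; apply: NNPP => Hne.
  have Hd : bc_dynamic dnf None [:: inr t'; inr t] [::] by do 7 right; left; exists t', t.
  apply: (cl_dyn_none Hcl Hd Hl (fun _ H => match H with end)).
  by move=> z [<-|[<-|[]]].
have Hpre : forall p, pre W t p -> 0 < m.1 p.
  move=> p Hp; case E: (0 < m.1 p) => //; exfalso.
  have Hd : bc_dynamic dnf None [:: inr t; inl (BP p, VBb false)] [::].
    by do 8 right; left; exists t, p.
  apply: (cl_dyn_none Hcl Hd Hl (fun _ H => match H with end)).
  by move=> z [<-|[<-|[]]] //; apply/HX; rewrite /= E.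
have [_ [Hinv2 Hok]] := reach_inv Hr.
have Hg : holds (dmodel W) m.2 (gd W t).
  apply: NNPP => Hng.
  case: (classic (guard_true (dmodel W) (gd W t))) => Hgt; first exact: Hng (Hgt _ Hok).
  have [cl [Hcl' Hlits]] := proj1 (dnfW Hgt Hok) Hng.
  have Hd : bc_dynamic dnf None (inr t :: [seq inl (trlit l0) | l0 <- cl]) [::].
    by do 10 right; exists t, cl.
  apply: (cl_dyn_none Hcl Hd Hl (fun _ H => match H with end)).
  move=> z [<-|/In_map [l0 [Hl0 ->]]] //.
  have := Hlits l0 Hl0; rewrite /dlit_holds /trlit; case: l0 Hl0 => x [o|] _ /= E;
    by apply/HX; rewrite /= E.
have Hex : forall v, exists o' : option Val,
    (match wr W t v with
     | None => o' = m.2 v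
     | Some [::] => o' = None
     | Some s => exists d, d \in s /\ o' = Some d end) /\
    (forall x : VarP W, sval x = v -> X (LPos (GF l.+1 (BFv x) (encopt o')))).
  move=> v; case E: (wr W t v) => [[|d0 s0]|].
  - exists None; split=> // x Ex.
    have Hd : bc_dynamic dnf (Some (BFv x, VN)) [:: inr t] [::].
      by do 5 right; left; exists t, x; rewrite Ex E.
    exact: (cl_dyn_some Hcl Hd Hl (fun _ H => match H with end) Hbt).
  - have Hv : inVp W v := inVp_wr E.
    pose x0 : VarP W := exist _ v Hv.
    have [o [Ho XO]] := cl_exist (B:=B) (BFv x0) Hcl (leqnn l.+1).
    have Rej : forall o, (o = VN \/ exists d, d \in adm W (sval x0) /\ d \notin (d0 :: s0) /\ o = VD d) ->
        X (LPos (GF l.+1 (BFv x0) o)) -> False.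
      move=> o' Ho' XO'.
      have Hd : bc_dynamic dnf None [:: inr t] [:: (BFv x0, o')].
        by do 6 right; left; exists t, x0, (d0 :: s0), o'.
      apply: (cl_dyn_none Hcl Hd Hl).
      + by move=> a [<-|[]] HN; apply: (Hcons (GF l.+1 (BFv x0) o')).
      + by move=> z [<-|[]].
    case: (encv_dom Ho) => [Eo|[d [Hda Eo]]]; first by exfalso; apply: (Rej o) => //; left.
    case: (boolP (d \in d0 :: s0)) => Hds; last first.
      by exfalso; apply: (Rej o) => //; right; exists d.
    exists (Some d); split; first by exists d.
    move=> x Ex; have -> : x = x0 by apply: val_inj.
    by rewrite /= -Eo.
  - exists (m.2 v); split=> // x Ex.
    have [o [Ho XO]] := cl_exist (B:=B) (BFv x) Hcl (leqnn l.+1).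
    suff Eo : o = encopt (m.2 v) by rewrite -Eo.
    have [_ Hc] := supp_cases Hst XO.
    case: Hc => [[x' [[Ex'] [_ Hb]]]|].
      by subst x'; have := proj1 (HX _ _) Hb; rewrite /= Ex.
    case=> [[p [bb [E' _]]]|]; first by discriminate E'.
    case=> [[t' [p [_ [E' _]]]]|]; first by discriminate E'.
    case=> [[t' [p [_ [E' _]]]]|]; first by discriminate E'.
    case=> [[t' [x' [s [d [Hw [_ [[Ex'] [_ Ht']]]]]]]]|].
      by subst x'; rewrite (Hat t' Ht') Ex E in Hw.
    case=> [[t' [x' [Hw [[Ex'] [_ Ht']]]]]|].
      by subst x'; rewrite (Hat t' Ht') Ex E in Hw.
    by case=> t' [E' _]; discriminate E'.
pose eta' := fun v => sval (constructive_indefinite_description _ (Hex v)).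
have Heta : forall v, _ := fun v => proj2_sig (constructive_indefinite_description _ (Hex v)).
pose M' := fun p => if pre W t p && ~~ post W t p then m.1 p - 1
            else if post W t p && ~~ pre W t p then m.1 p + 1 else m.1 p.
have Hvf : valid_firing W m t (M', eta').
  apply: vf_intro => // v; exact: (Heta v).1.
exists t, (M', eta'); split=> //; split.
  apply: functional_extensionality => a.
  apply: propositional_extensionality; rewrite /label /encL; split; first exact: Hat.
  by move=> ->.
have Hv : forall f, X (LPos (GF l.+1 f (encf (M', eta') f))).
  case=> [x|p|].
  - exact: (Heta (sval x)).2 x erefl.
  - rewrite (encp_next p Hr Hvf).
    have Hb : forall z, List.In z [:: inr t] -> X (LPos (gaft l z)) by move=> z [<-|[]].
    case E1: (pre W t p && ~~ post W t p); [|case E2: (post W t p && ~~ pre W t p)].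
    + have Hd : bc_dynamic dnf (Some (BP p, VBb false)) [:: inr t] [::].
        by do 2 right; left; exists t, p.
      exact: (cl_dyn_some Hcl Hd Hl (fun _ H => match H with end) Hb).
    + have Hd : bc_dynamic dnf (Some (BP p, VBb true)) [:: inr t] [::].
        by do 3 right; left; exists t, p.
      exact: (cl_dyn_some Hcl Hd Hl (fun _ H => match H with end) Hb).
    + have [o [_ XO]] := cl_exist (B:=B) (BP p) Hcl (leqnn l.+1).
      suff Eo : o = encf m (BP p) by rewrite -Eo.
      have [_ Hc] := supp_cases Hst XO.
      case: Hc => [[x' [E' _]]|]; first by discriminate E'.
      case=> [[p' [bb [[Ep] [Eo Hb']]]]|].
        by subst p'; rewrite Eo; apply/HX.
      case=> [[t' [p' [Hpp [[Ep] [_ Ht']]]]]|].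
        by subst p'; rewrite (Hat t' Ht') E1 in Hpp.
      case=> [[t' [p' [Hpp [[Ep] [_ Ht']]]]]|].
        by subst p'; rewrite (Hat t' Ht') E2 in Hpp.
      case=> [[t' [x' [s [d [_ [_ [E' _]]]]]]]|]; first by discriminate E'.
      case=> [[t' [x' [_ [E' _]]]]|]; first by discriminate E'.
      by case=> t' [E' _]; discriminate E'.
  - have Hd : bc_dynamic dnf (Some (BT, VBb true)) [:: inr t] [::].
      by do 9 right; left; exists t.
    exact: (cl_dyn_some Hcl Hd Hl (fun _ H => match H with end) Hbt).
apply: functional_extensionality => f; apply: functional_extensionality => o.
apply: propositional_extensionality; rewrite /sigma /encS; split.
- move=> H; exact: (uniq_val Hst (leqnn _) H (Hv f)).
- by move=> ->.
Qed.


Lemma chain1 steps n st ac : hist n st ac ->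
  chain (@RG_trans _ _ _ _ _ W) (st n) steps ->
  chain (TS_trans B) (encS (st n)) [seq (encL p.1, encS p.2) | p <- steps].
Proof.
elim: steps n st ac => [|[t s'] r IH] n st ac Hh //=.
move=> [[Hreach Hv] Hc].
pose st' := fun i => if i == n.+1 then s' else st i.
pose ac' := fun i => if i == n then Some t else ac i.
have Hn1 : (n == n.+1) = false by rewrite ltn_eqF.
have Hh' : hist n.+1 st' ac'.
  split; first exact: Hh.1.
  move=> i Hi; rewrite /st' /ac'.
  case E: (i == n).
    by move/eqP: E => ->; exists t; rewrite eqxx Hn1.
  have Hin : i < n by rewrite ltn_neqAle E -ltnS.
  have [t0 [E0 Hv0]] := Hh.2 i Hin.
  by exists t0; rewrite eqSS E (ltn_eqF (leqW Hin)).
have Est : st' n = st n by rewrite /st' Hn1.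
split.
  exists n, (Xh n.+1 st' ac'); split; first exact: Xh_stable Hh'.
  split; first by rewrite (sigma_Xh st' ac' (leqnSn n)) Est; exact: hist_TS Hh.
  split; first by rewrite (sigma_Xh st' ac' (leqnSn n)) Est.
  split; first by rewrite (label_Xh st' (ltnSn n) (_ : ac' n = Some t)) // /ac' eqxx.
  by rewrite (sigma_Xh st' ac' (leqnn _)) /st' eqxx.
have := IH n.+1 st' ac' Hh'; rewrite /st' eqxx; apply; exact: Hc.
Qed.

Lemma chain2 steps' m : reachable W m -> chain (TS_trans B) (encS m) steps' ->
  exists steps, chain (@RG_trans _ _ _ _ _ W) m steps /\
    [seq (encL p.1, encS p.2) | p <- steps] = steps'.
Proof.
elim: steps' m => [|[lab s''] r IH] m Hr /=; first by exists [::].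
move=> [[l [X [Hst [_ [Hs [Hl Hs']]]]]] Hc].
have [t [m' [Hv [Hlab Hm']]]] := step_analysis Hst Hr (esym Hs).
have Hr' : reachable W m' := reachS Hr Hv.
rewrite Hs' Hm' in Hc; have [steps [Hc' Em]] := IH m' Hr' Hc.
exists ((t, m') :: steps); split; first by split.
by rewrite /= Em Hl Hlab Hs' Hm'.
Qed.

Lemma main_sec : trace_equiv (reachable W) (RG_init W) (@RG_trans _ _ _ _ _ W)
    (TS_init B) (@TS_trans _ _ _ B).
Proof.
exists encS, encL; split; [|split; [|split]].
- move=> [M eta] [M' eta'] Hr Hr' E.
  have Ef : forall f, encf (M, eta) f = encf (M', eta') f.
    by move=> f; have := equal_f (equal_f E f) (encf (M, eta) f); rewrite /encS => <-.
  congr pair; apply: functional_extensionality.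
  + move=> p; have := Ef (BP p); have := safeW Hr p; have := safeW Hr' p => /= H1 H2 [].
    by move: H1 H2; case: (M' p) => [|[|?]]; case: (M p) => [|[|?]].
  + move=> v; case: (boolP (inVp W v)) => Hv.
      have := Ef (BFv (exist _ v Hv)); rewrite /=.
      by case: (eta v) => [d|]; case: (eta' v) => [d'|] //= [->].
    by have := (reach_inv Hr).1 v Hv; have := (reach_inv Hr').1 v Hv; rewrite /= => -> ->.
- by move=> t t' E; have := equal_f E t; rewrite /encL => <-.
- move=> s0 steps [Hs0 Hc].
  pose st0 := fun _ : nat => init_state W.
  pose ac0 := fun _ : nat => @None Trans.
  have Hh0 : hist 0 st0 ac0 by split.
  rewrite Hs0; split.
    exists (Xh 0 st0 ac0); split; first exact: Xh_stable Hh0.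
    by rewrite (sigma_Xh st0 ac0 (leqnn 0)).
  rewrite Hs0 in Hc; exact: (chain1 Hh0 Hc).
- move=> s0' steps' [[X [HX Hs0]] Hc].
  have E0 : s0' = encS (init_state W) by rewrite Hs0; exact: sigma0 HX.
  rewrite E0 in Hc; have [steps [Hc' Em]] := chain2 (reach0 W) Hc.
  by exists (init_state W), steps; split; [split|split].
Qed.

End Main.

Unset Implicit Arguments.

Theorem mainTheorem1 (Var Val : eqType) (DomI Place Trans : finType)
  (W : dawnet Var Val DomI Place Trans)
  (dnf : Trans -> seq (seq (dlit W))) :
  wf_dawnet W ->
  one_safe W ->
  (forall t, ~ guard_true (dmodel W) (gd W t) -> dnf_char (dnf t) (GNot (gd W t))) ->
  trace_equiv (reachable W) (RG_init W) (@RG_trans _ _ _ _ _ W)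
    (TS_init (bc dnf)) (@TS_trans _ _ _ (bc dnf)).
Proof. by move=> H1 H2 H3; apply: main_sec. Qed.
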